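(* Let $G$ be a connected graph that is not a path, not a cycle, and not the claw graph $K_{1,3}$. Then $L^n(G)$ is not representable for every integer $n \geqslant 4$.
   Context: All graphs are finite and simple. For a word $W$ over an alphabet, two distinct letters $x,y$ alternate in $W$ if both occur in $W$ and, after erasing all other letters from $W$, one obtains a word of the form $xyxy\ldots$ or $yxyx\ldots$ (an alternating word of any length). A graph $G=(V,E)$ is representable if there exists a word $W$ over the alphabet $V$ in which every vertex occurs, such that for all distinct $x,y\in V$, the letters $x$ and $y$ alternate in $W$ if and only if $(x,y)\in E$. The line graph $L(G)$ of a graph $G$ has the edges of $G$ as vertices, two of them being adjacent in $L(G)$ iff they share an endpoint in $G$. $L^n(G)$ denotes the graph obtained from $G$ by applying the line graph operation $n$ times. *)

(* Defs.v *)
(* Finite simple graphs as symmetric irreflexive relations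
   on a finType, packaged in a record so that the line graph can be iterated. *)
From mathcomp Require Import all_boot.
Set Implicit Arguments. Unset Strict Implicit. Unset Printing Implicit Defensive.

Record sgraph := SGraph {
  vert :> finType;
  adj : rel vert;
  adj_sym : symmetric adj;
  adj_irr : irreflexive adj }.

Definition is_edge (G : sgraph) (e : {set G}) : bool :=
  [exists x : G, exists y : G, adj x y && (e == [set x; y])].

Definition edge_type (G : sgraph) : finType := {e : {set G} | is_edge e}.

Definition line_adj (G : sgraph) : rel (edge_type G) :=
  fun e f => (val e != val f) && (val e :&: val f != set0).

Lemma line_adj_sym (G : sgraph) : symmetric (@line_adj G).
Proof. by move=> e f; rewrite /line_adj eq_sym setIC. Qed.

Lemma line_adj_irr (G : sgraph) : irreflexive (@line_adj G).
Proof. by move=> e; rewrite /line_adj eqxx. Qed.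

Definition line_graph (G : sgraph) : sgraph :=
  SGraph (@line_adj_sym G) (@line_adj_irr G).

Fixpoint iter_line (n : nat) (G : sgraph) : sgraph :=
  match n with 0 => G | n'.+1 => line_graph (iter_line n' G) end.

Definition isomorphic (G H : sgraph) : Prop :=
  exists f : G -> H, bijective f /\ forall x y, adj (f x) (f y) = adj x y.

Definition connected (G : sgraph) : Prop :=
  0 < #|G| /\ forall x y : G, connect (@adj G) x y.

Definition path_rel (k : nat) : rel 'I_k :=
  fun i j => (i.+1 == j :> nat) || (j.+1 == i :> nat).
Lemma path_rel_sym (k : nat) : symmetric (@path_rel k).
Proof. by move=> i j; rewrite /path_rel orbC. Qed.
Lemma path_rel_irr (k : nat) : irreflexive (@path_rel k).
Proof. by move=> i; rewrite /path_rel orbb; apply/negbTE; rewrite neq_ltn ltnSn orbT. Qed.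
Definition path_graph (k : nat) : sgraph := SGraph (@path_rel_sym k) (@path_rel_irr k).

Definition cycle_rel (k : nat) : rel 'I_k :=
  fun i j => (i != j) && ((i.+1 %% k == j :> nat) || (j.+1 %% k == i :> nat)).
Lemma cycle_rel_sym (k : nat) : symmetric (@cycle_rel k).
Proof. by move=> i j; rewrite /cycle_rel eq_sym orbC. Qed.
Lemma cycle_rel_irr (k : nat) : irreflexive (@cycle_rel k).
Proof. by move=> i; rewrite /cycle_rel eqxx. Qed.
Definition cycle_graph (k : nat) : sgraph := SGraph (@cycle_rel_sym k) (@cycle_rel_irr k).

Definition claw_rel : rel 'I_4 :=
  fun i j => ((i == 0 :> nat) && (j != 0 :> nat)) || ((j == 0 :> nat) && (i != 0 :> nat)).
Lemma claw_rel_sym : symmetric claw_rel.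
Proof. by move=> i j; rewrite /claw_rel orbC. Qed.
Lemma claw_rel_irr : irreflexive claw_rel.
Proof. by move=> i; rewrite /claw_rel; case: (i == 0 :> nat). Qed.
Definition claw_graph : sgraph := SGraph claw_rel_sym claw_rel_irr.

Definition is_path (G : sgraph) : Prop := exists k, isomorphic G (path_graph k).
Definition is_cycle (G : sgraph) : Prop := exists k, 3 <= k /\ isomorphic G (cycle_graph k).
Definition is_claw (G : sgraph) : Prop := isomorphic G claw_graph.

(* x and y alternate in W: both occur, and after erasing all other letters
   no two consecutive letters are equal (i.e. the word is xyxy... or yxyx...). *)
Definition alternate (T : eqType) (W : seq T) (x y : T) : bool :=
  [&& x \in W, y \in W &
      sorted (fun a b => a != b) [seq z <- W | (z == x) || (z == y)]].

Definition representable (G : sgraph) : Prop :=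
  exists W : seq G, (forall x : G, x \in W) /\
    forall x y : G, x != y -> (alternate W x y <-> adj x y).

(* Main.v *)
Require Import Defs.
From mathcomp Require Import all_boot zify.
From Stdlib Require Import Classical ClassicalEpsilon.
Set Implicit Arguments. Unset Strict Implicit. Unset Printing Implicit Defensive.

Section Words.
Variable T : eqType.
Implicit Types W : seq T.

Definition ld (x y : T) (d : nat) W := forall n,
  count_mem y (take n W) <= d + count_mem x (take n W) <= (count_mem y (take n W)).+1.

Lemma ld_nil x y d : d <= 1 -> ld x y d [::].
Proof. move=> hd n; rewrite /=; lia. Qed.

Lemma ld_le1 x y d W : ld x y d W -> d <= 1.
Proof. move=> /(_ 0); rewrite take0 /=; lia. Qed.

Lemma ld_cons_other x y d z W : z != x -> z != y -> ld x y d (z :: W) <-> ld x y d W.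
Proof.
move=> zx zy; split=> H n.
  by have := H n.+1; rewrite /= (negbTE zx) (negbTE zy).
case: n => [|n]; first by have := H 0; rewrite !take0.
by rewrite /= (negbTE zx) (negbTE zy) H.
Qed.

Lemma ld_cons_x x y d W : x != y -> ld x y d (x :: W) <-> d = 0 /\ ld x y 1 W.
Proof.
move=> xy; split.
  move=> H; have H1 := H 1; rewrite /= take0 /= eqxx (negbTE xy) in H1.
  have d0 : d = 0 by lia.
  split=> // n; have := H n.+1; rewrite /= eqxx (negbTE xy) d0; lia.
move=> [-> H] [|n]; first by rewrite take0.
have := H n; rewrite /= eqxx (negbTE xy); lia.
Qed.

Lemma ld_cons_y x y d W : x != y -> ld x y d (y :: W) <-> d = 1 /\ ld x y 0 W.
Proof.
move=> xy; have yx : y != x by rewrite eq_sym.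
split.
  move=> H; have H0 := H 0; have H1 := H 1.
  rewrite /= take0 /= eqxx (negbTE yx) in H1; rewrite take0 /= in H0.
  have d1 : d = 1 by lia.
  split=> // n; have := H n.+1; rewrite /= eqxx (negbTE yx) d1; lia.
move=> [-> H] [|n]; first by rewrite take0.
have := H n; rewrite /= eqxx (negbTE yx); lia.
Qed.

Definition fxy (x y : T) W := [seq z <- W | (z == x) || (z == y)].

Lemma path_ld x y W : x != y ->
  (path (fun a b => a != b) y (fxy x y W) <-> ld x y 0 W) /\
  (path (fun a b => a != b) x (fxy x y W) <-> ld x y 1 W).
Proof.
move=> xy; have yx : y != x by rewrite eq_sym.
elim: W => [|z W [IH0 IH1]]; first by split; split=> // _; apply: ld_nil.
rewrite /fxy /=.
case: (eqVneq z x) => [->|zx] /=.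
  rewrite yx eqxx /=; split.
    split=> [/IH1 h|/(ld_cons_x _ _ xy) [_ /IH1 //]].
    by apply/(ld_cons_x _ _ xy).
  by split=> // /(ld_cons_x _ _ xy) [].
case: (eqVneq z y) => [->|zy] /=.
  rewrite xy eqxx /=; split.
    by split=> // /(ld_cons_y _ _ xy) [].
  split=> [/IH0 h|/(ld_cons_y _ _ xy) [_ /IH0 //]].
  by apply/(ld_cons_y _ _ xy).
split; split.
- by move=> /IH0 h; apply/(ld_cons_other _ _ zx zy).
- by move=> /(ld_cons_other _ _ zx zy) /IH0.
- by move=> /IH1 h; apply/(ld_cons_other _ _ zx zy).
- by move=> /(ld_cons_other _ _ zx zy) /IH1.
Qed.

Lemma ld_swap x y W : ld x y 1 W <-> ld y x 0 W.
Proof. by split=> H n; have := H n; lia. Qed.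

Lemma alt_iff x y W : x != y ->
  alternate W x y <-> [/\ x \in W, y \in W & ld x y 0 W \/ ld y x 0 W].
Proof.
move=> xy; have [P0 P1] := path_ld W xy.
have E : sorted (fun a b => a != b) (fxy x y W) <->
     (path (fun a b => a != b) y (fxy x y W) \/ path (fun a b => a != b) x (fxy x y W)).
  have : all (fun z => (z == x) || (z == y)) (fxy x y W) by apply: filter_all.
  case: (fxy x y W) => [|h s] /=; first by split=> //; left.
  case/andP=> /orP[] /eqP -> _.
    by rewrite eq_sym xy eqxx /=; split; [left|case].
  by rewrite xy eqxx /=; split; [right|case].
rewrite /alternate; split.
  case/and3P=> hx hy; rewrite -/(fxy x y W) => /E [/P0 h|/P1 h]; split=> //; first by left.
  by right; apply/ld_swap.
case=> hx hy h; rewrite hx hy /= -/(fxy x y W); apply/E.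
by case: h => h; [left; apply/P0 | right; apply/P1; apply/ld_swap].
Qed.

Definition lead W x y := ld x y 0 W.

Lemma lead_antisym W x y : x != y -> lead W x y -> lead W y x -> x \in W -> False.
Proof.
move=> xy H1 H2 xW; set n := index x W.
have ltn : n < size W by rewrite index_mem.
have := H1 n.+1; have := H2 n.+1; have := H1 n.
rewrite (take_nth x ltn) nth_index // -!cats1 !count_cat /= eqxx.
by rewrite (negbTE xy) /=; lia.
Qed.

Lemma lead3 W a b c : lead W a b -> lead W b c -> lead W c a -> lead W b a.
Proof. by move=> H1 H2 H3 n; have := H1 n; have := H2 n; have := H3 n; lia. Qed.

Lemma lead4 W a b c d : lead W a b -> lead W b c -> lead W c d -> lead W d a -> lead W b a.
Proof. by move=> H1 H2 H3 H4 n; have := H1 n; have := H2 n; have := H3 n; have := H4 n; lia. Qed.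

Lemma lead_sc W a b c d : lead W a b -> lead W b c -> lead W c d -> lead W a d ->
  lead W a c /\ lead W b d.
Proof.
move=> H1 H2 H3 H4; split=> n; have := H1 n; have := H2 n; have := H3 n; have := H4 n; lia.
Qed.

End Words.

Definition E8 : seq (nat * nat) :=
  [:: (0,1); (0,2); (0,3); (0,4); (0,7); (1,2); (1,3); (1,4); (1,5); (2,3); (2,5); (2,6); (3,6); (3,7); (4,5); (4,7); (5,6); (6,7)].
Definition V8 := iota 0 8.
Definition tadj (i j : nat) : bool := ((i,j) \in E8) || ((j,i) \in E8).
Definition lit (i j : nat) : nat * bool :=
  if (i,j) \in E8 then (index (i,j) E8, true) else (index (j,i) E8, false).
Definition pairs8 := [seq (a,b) | a <- V8, b <- V8].
Definition quads := [seq (ab, cd) | ab <- pairs8, cd <- pairs8].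
Definition cls (q : (nat * nat) * (nat * nat)) : seq (seq (nat * bool)) :=
  let: ((a,b),(c,d)) := q in
  (if [&& tadj a b, tadj b c, tadj c a & d == 0] then [:: [:: lit a b; lit b c; lit c a]] else [::]) ++
  (if [&& uniq [:: a; b; c; d], tadj a b, tadj b c, tadj c d & tadj d a] then
     [:: [:: lit a b; lit b c; lit c d; lit d a];
         [:: lit a b; lit b c; lit c d; lit a d] ++ (if tadj a c then [:: lit c a] else [::]);
         [:: lit a b; lit b c; lit c d; lit a d] ++ (if tadj b d then [:: lit d b] else [::])]
   else [::]).
Definition CL := flatten [seq cls q | q <- quads].
Definition viol (acc : seq bool) (cl : seq (nat * bool)) :=
  all (fun l => (l.1 < size acc) && (nth false acc l.1 == l.2)) cl.
Fixpoint search (cl0 : seq (seq (nat * bool))) (n : nat) (acc : seq bool) : bool :=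
  if has (viol acc) cl0 then true else
  match n with 0 => false | n'.+1 => if search cl0 n' (rcons acc true) then search cl0 n' (rcons acc false) else false end.

Lemma viol_cat acc bs cl : viol acc cl -> viol (acc ++ bs) cl.
Proof.
move=> /allP H; apply/allP=> l /H /andP[lt /eqP <-].
by rewrite size_cat nth_cat lt eqxx (leq_trans lt) // leq_addr.
Qed.

Lemma searchP cl0 n acc : search cl0 n acc -> forall bs, size bs = n -> has (viol (acc ++ bs)) cl0.
Proof.
elim: n acc => [|n IH] acc H bs hs.
  case/orP: H => // /hasP [cl Hcl Hv].
  by apply/hasP; exists cl => //; apply: viol_cat.
case/orP: H => [/hasP [cl Hcl Hv]|/andP [H1 H2]].
  by apply/hasP; exists cl => //; apply: viol_cat.
case: bs hs => [|b bs] // [hs].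
by rewrite -cat_rcons; case: b; [apply: IH H1 _ hs | apply: IH H2 _ hs].
Qed.

Lemma check_all : search CL 18 [::].
Proof. vm_compute. reflexivity. Qed.


Section Bridge.
Variable R : nat -> nat -> bool.
Hypothesis Htot : forall i j, i < 8 -> j < 8 -> tadj i j -> R i j || R j i.
Hypothesis Hanti : forall i j, i < 8 -> j < 8 -> tadj i j -> R i j -> R j i -> False.
Hypothesis Htri : forall a b c, a < 8 -> b < 8 -> c < 8 ->
  tadj a b -> tadj b c -> tadj c a -> R a b -> R b c -> R c a -> False.
Hypothesis Hcyc : forall a b c d, a < 8 -> b < 8 -> c < 8 -> d < 8 -> uniq [:: a; b; c; d] ->
  tadj a b -> tadj b c -> tadj c d -> tadj d a ->
  R a b -> R b c -> R c d -> R d a -> False.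
Hypothesis Hsc : forall a b c d, a < 8 -> b < 8 -> c < 8 -> d < 8 -> uniq [:: a; b; c; d] ->
  tadj a b -> tadj b c -> tadj c d -> tadj d a ->
  R a b -> R b c -> R c d -> R a d -> (tadj a c && R a c) && (tadj b d && R b d).

Let bs := [seq R e.1 e.2 | e <- E8].

Lemma litR i j : i < 8 -> j < 8 -> tadj i j ->
  (nth false bs (lit i j).1 == (lit i j).2) = R i j.
Proof.
move=> hi hj hij; rewrite /lit /bs.
case E1: ((i,j) \in E8).
  by rewrite (nth_map (0,0)) ?index_mem // nth_index //= eqxx.
have E2 : (j,i) \in E8 by move: hij; rewrite /tadj E1.
rewrite (nth_map (0,0)) ?index_mem // nth_index //=.
have hji : tadj j i by rewrite /tadj E2.
have := Htot hi hj hij; have := Hanti hj hi hji.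
by case: (R j i); case: (R i j) => //= H _; exfalso; apply: H.
Qed.

Lemma bridge_false : False.
Proof.
have : size bs = 18 by rewrite size_map.
move=> /(searchP check_all); rewrite cat0s => /hasP [cl].
rewrite /CL => /flatten_mapP [[[a b] [c d]]].
rewrite /quads => /allpairsP [[[a' b'] [c' d']] [/= /allpairsP [[a1 b1] [ha hb [-> ->]]]]].
move=> /allpairsP [[c1 d1] [hc hd [-> ->]]] [-> ->] -> ->.
rewrite !mem_iota !add0n in ha hb hc hd.
have L : forall i j, tadj i j -> i < 8 -> j < 8 -> forall cl', viol bs cl' -> lit i j \in cl' -> R i j.
  move=> i j hij hi hj cl' /allP H /H /andP[_]; by rewrite litR.
rewrite /= in ha hb hc hd.
have M : forall (x : nat * bool) s, x \in x :: s by move=> x s; rewrite inE eqxx.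
have M2 : forall (x y : nat * bool) s, x \in y :: x :: s by move=> x y s; rewrite !inE eqxx orbT.
have M3 : forall (x y z : nat * bool) s, x \in y :: z :: x :: s by move=> x y z s; rewrite !inE eqxx !orbT.
have M4 : forall (x y z w : nat * bool) s, x \in y :: z :: w :: x :: s by move=> x y z w s; rewrite !inE eqxx !orbT.
have M5 : forall (x y z w v : nat * bool), x \in [:: y; z; w; v; x] by move=> x y z w v; rewrite !inE eqxx !orbT.
have sym : forall i j, tadj i j -> tadj j i by move=> i j; rewrite /tadj orbC.
rewrite mem_cat => /orP [].
  case: ifP => // /and4P [tab tbc tca _]; rewrite inE => /eqP -> V.
  exact: (Htri ha hb hc tab tbc tca (L _ _ tab ha hb _ V (M _ _)) (L _ _ tbc hb hc _ V (M2 _ _ _)) (L _ _ tca hc ha _ V (M3 _ _ _ _))).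
case: ifP => // /and5P [u tab tbc tcd tda].
have tad := sym _ _ tda.
have R1 := fun cl V (m : lit a1 b1 \in cl) => L _ _ tab ha hb cl V m.
have R2 := fun cl V (m : lit b1 c1 \in cl) => L _ _ tbc hb hc cl V m.
have R3 := fun cl V (m : lit c1 d1 \in cl) => L _ _ tcd hc hd cl V m.
have R4 := fun cl V (m : lit a1 d1 \in cl) => L _ _ tad ha hd cl V m.
rewrite !inE => /orP [/eqP ->|/orP [/eqP ->|/eqP ->]] V.
- exact: (Hcyc ha hb hc hd u tab tbc tcd tda (R1 _ V (M _ _)) (R2 _ V (M2 _ _ _)) (R3 _ V (M3 _ _ _ _)) (L _ _ tda hd ha _ V (M4 _ _ _ _ _))).
- have := Hsc ha hb hc hd u tab tbc tcd tda (R1 _ V (M _ _)) (R2 _ V (M2 _ _ _)) (R3 _ V (M3 _ _ _ _)) (R4 _ V (M4 _ _ _ _ _)).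
  case/andP=> /andP [tac rac] _.
  move: V; rewrite tac => V.
  exact: (Hanti ha hc tac rac (L _ _ (sym _ _ tac) hc ha _ V (M5 _ _ _ _ _))).
- have := Hsc ha hb hc hd u tab tbc tcd tda (R1 _ V (M _ _)) (R2 _ V (M2 _ _ _)) (R3 _ V (M3 _ _ _ _)) (R4 _ V (M4 _ _ _ _ _)).
  case/andP=> _ /andP [tbd rbd].
  move: V; rewrite tbd => V.
  exact: (Hanti hb hd tbd rbd (L _ _ (sym _ _ tbd) hd hb _ V (M5 _ _ _ _ _))).
Qed.
End Bridge.

Section Sets.
Variable T : finType.
Lemma set2_eq (u v w z : T) : u != v ->
  ([set u; v] == [set w; z]) = ((u == w) && (v == z)) || ((u == z) && (v == w)).
Proof.
move=> uv; apply/idP/idP.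
  move=> /eqP E.
  have hu : u \in [set w; z] by rewrite -E set21.
  have hv : v \in [set w; z] by rewrite -E set22.
  have hw : w \in [set u; v] by rewrite E set21.
  have hz : z \in [set u; v] by rewrite E set22.
  move: hu hv hw hz; rewrite !in_set2.
  case/orP=> /eqP eu; case/orP=> /eqP ev; subst; rewrite ?eqxx ?orbT //; by rewrite eqxx in uv.
case/orP=> /andP [/eqP -> /eqP ->] //; by rewrite setUC.
Qed.

Lemma set2_meet (u v w z : T) :
  ([set u; v] :&: [set w; z] != set0) = [|| u == w, u == z, v == w | v == z].
Proof.
apply/set0Pn/idP.
  case=> t; rewrite inE !in_set2 => /andP [/orP [] /eqP -> /orP [] /eqP ->]; by rewrite eqxx ?orbT.
case/or4P=> /eqP ->; [exists w|exists z|exists w|exists z]; by rewrite inE !in_set2 !eqxx ?orbT.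
Qed.
End Sets.

Section LG.
Variable G : sgraph.

Lemma edge_set2 (u v : G) : adj u v -> is_edge [set u; v].
Proof. by move=> h; apply/existsP; exists u; apply/existsP; exists v; rewrite h eqxx. Qed.

Definition mkE (u v : G) (h : adj u v) : line_graph G := exist _ [set u; v] (edge_set2 h).

Lemma adj_neq (u v : G) : adj u v -> u != v.
Proof. by apply: contraTneq => ->; rewrite adj_irr. Qed.

Lemma mkE_adj (u v w z : G) (h1 : adj u v) (h2 : adj w z) :
  adj (mkE h1) (mkE h2) =
   ~~ (((u == w) && (v == z)) || ((u == z) && (v == w))) && [|| u == w, u == z, v == w | v == z].
Proof. by rewrite /= /line_adj /= set2_eq ?adj_neq // set2_meet. Qed.

Lemma mkE_eq (u v w z : G) (h1 : adj u v) (h2 : adj w z) :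
  (mkE h1 == mkE h2) = ((u == w) && (v == z)) || ((u == z) && (v == w)).
Proof. by rewrite -val_eqE /= set2_eq ?adj_neq. Qed.
End LG.

Ltac neqs := repeat match goal with
 | H : is_true (?x != ?y) |- _ => let H1 := fresh "E" in let H2 := fresh "E" in
     move: (H) => /negbTE H1; move: H; rewrite eq_sym => /negbTE H2 end.
Ltac bsimp := repeat match goal with H : (?a == ?b) = false |- context [?a == ?b] => rewrite H end;
  rewrite ?eqxx /=.

Definition has_paw (G : sgraph) := exists p q r s : G,
  [/\ adj p q, adj p r, adj q r, adj p s & (s != q) && (s != r)].
Definition has_diamond (G : sgraph) := exists a b c d : G,
  [/\ adj a b, adj a c, adj b c, adj b d & adj c d && (a != d)].
Definition has_W4 (G : sgraph) := exists h r1 r2 r3 r4 : G,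
  [/\ adj h r1, adj h r2, adj h r3 & adj h r4] /\
  [/\ adj r1 r2, adj r2 r3, adj r3 r4 & adj r4 r1] /\ (r1 != r3) && (r2 != r4).

Lemma paw_L (G : sgraph) : has_paw G -> has_paw (line_graph G).
Proof.
move=> [p [q [r [s [pq pr qr ps /andP[sq sr]]]]]].
exists (mkE pq), (mkE pr), (mkE qr), (mkE ps).
have := adj_neq pq; have := adj_neq pr; have := adj_neq qr; have := adj_neq ps.
move=> n1 n2 n3 n4; neqs.
by split; rewrite ?mkE_adj ?mkE_eq; bsimp; rewrite ?orbT.
Qed.

Lemma paw_diamond (G : sgraph) : has_paw G -> has_diamond (line_graph G).
Proof.
move=> [p [q [r [s [pq pr qr ps /andP[sq sr]]]]]].
exists (mkE qr), (mkE pq), (mkE pr), (mkE ps).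
have := adj_neq pq; have := adj_neq pr; have := adj_neq qr; have := adj_neq ps.
move=> n1 n2 n3 n4; neqs.
by split; rewrite ?mkE_adj ?mkE_eq; bsimp; rewrite ?orbT.
Qed.

Lemma diamond_W4 (G : sgraph) : has_diamond G -> has_W4 (line_graph G).
Proof.
move=> [a [b [c [d [ab ac bc bd /andP[cd ad]]]]]].
exists (mkE bc), (mkE ab), (mkE ac), (mkE cd), (mkE bd).
have := adj_neq ab; have := adj_neq ac; have := adj_neq bc; have := adj_neq bd; have := adj_neq cd.
move=> n1 n2 n3 n4 n5; neqs.
by split; [|split]; [split|split|]; rewrite ?mkE_adj ?mkE_eq; bsimp; rewrite ?orbT.
Qed.

Section W4.
Variable K : sgraph.
Variables h r1 r2 r3 r4 : K.
Hypotheses (a1 : adj h r1) (a2 : adj h r2) (a3 : adj h r3) (a4 : adj h r4)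
  (b1 : adj r1 r2) (b2 : adj r2 r3) (b3 : adj r3 r4) (b4 : adj r4 r1)
  (n13 : r1 != r3) (n24 : r2 != r4).

Definition xs (i : nat) : line_graph K :=
  match i with 0 => mkE a1 | 1 => mkE a2 | 2 => mkE a3 | 3 => mkE a4
  | 4 => mkE b1 | 5 => mkE b2 | 6 => mkE b3 | _ => mkE b4 end.

Lemma eqF_sym (T : eqType) (x y : T) : x != y -> (y == x) = false.
Proof. by rewrite eq_sym => /negbTE. Qed.

Lemma xs_facts i j : i < 8 -> j < 8 ->
  (adj (xs i) (xs j) = tadj i j) /\ ((xs i == xs j) = (i == j)).
Proof.
have e1 := negbTE (adj_neq a1); have f1 := eqF_sym (adj_neq a1).
have e2 := negbTE (adj_neq a2); have f2 := eqF_sym (adj_neq a2).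
have e3 := negbTE (adj_neq a3); have f3 := eqF_sym (adj_neq a3).
have e4 := negbTE (adj_neq a4); have f4 := eqF_sym (adj_neq a4).
have e5 := negbTE (adj_neq b1); have f5 := eqF_sym (adj_neq b1).
have e6 := negbTE (adj_neq b2); have f6 := eqF_sym (adj_neq b2).
have e7 := negbTE (adj_neq b3); have f7 := eqF_sym (adj_neq b3).
have e8 := negbTE (adj_neq b4); have f8 := eqF_sym (adj_neq b4).
have e9 := negbTE n13; have f9 := eqF_sym n13.
have e10 := negbTE n24; have f10 := eqF_sym n24.
case: i => [|[|[|[|[|[|[|[|i]]]]]]]]; last by [].
all: case: j => [|[|[|[|[|[|[|[|j]]]]]]]]; last by [].
all: move=> _ _.
all: cbn [xs]; rewrite mkE_adj mkE_eq.
all: bsimp.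
all: by [].
Qed.

Lemma W4_nonrep : ~ representable (line_graph K).
Proof.
move=> [W [Wall Wrep]].
pose R i j := if excluded_middle_informative (lead W (xs i) (xs j)) then true else false.
have RP : forall i j, R i j <-> lead W (xs i) (xs j).
  move=> i j; rewrite /R; case: excluded_middle_informative => //.
have NE : forall i j, i < 8 -> j < 8 -> i != j -> xs i != xs j.
  by move=> i j hi hj; rewrite (xs_facts hi hj).2.
have AD : forall i j, i < 8 -> j < 8 -> adj (xs i) (xs j) = tadj i j.
  by move=> i j hi hj; rewrite (xs_facts hi hj).1.
have tne : forall i j, tadj i j -> i != j.
  by move=> i j; apply: contraTneq => ->; rewrite /tadj orbb; case: j => [|[|[|[|[|[|[|[|j]]]]]]]].
have Hanti : forall i j, i < 8 -> j < 8 -> tadj i j -> R i j -> R j i -> False.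
  move=> i j hi hj t /RP l1 /RP l2.
  exact: (lead_antisym (NE _ _ hi hj (tne _ _ t)) l1 l2 (Wall _)).
have ALT : forall i j, i < 8 -> j < 8 -> i != j -> lead W (xs i) (xs j) -> tadj i j /\ R i j.
  move=> i j hi hj nij l; split; last by apply/RP.
  rewrite -AD //; apply/(Wrep _ _ (NE _ _ hi hj nij)).
  by apply/(alt_iff _ (NE _ _ hi hj nij)); split; [apply: Wall|apply: Wall|left].
apply: (bridge_false (R:=R)).
- move=> i j hi hj t.
  have ax : adj (xs i) (xs j) by rewrite AD.
  have nij := NE _ _ hi hj (tne _ _ t).
  have := (Wrep _ _ nij).2 ax => /(alt_iff _ nij) [_ _ [l|l]]; apply/orP; [left|right]; by apply/RP.
- exact: Hanti.
- move=> a b c ha hb hc tab tbc tca /RP lab /RP lbc /RP lca.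
  have lba := lead3 lab lbc lca.
  exact: (Hanti _ _ ha hb tab (proj2 (RP _ _) lab) (proj2 (RP _ _) lba)).
- move=> a b c d ha hb hc hd u tab tbc tcd tda /RP lab /RP lbc /RP lcd /RP lda.
  have lba := lead4 lab lbc lcd lda.
  exact: (Hanti _ _ ha hb tab (proj2 (RP _ _) lab) (proj2 (RP _ _) lba)).
- move=> a b c d ha hb hc hd u tab tbc tcd tda /RP lab /RP lbc /RP lcd /RP lad.
  have [lac lbd] := lead_sc lab lbc lcd lad.
  move: u; rewrite /= !inE !negb_or => /and4P [/and3P [_ nac _] /andP [_ nbd] _ _].
  have [t1 r1'] := ALT _ _ ha hc nac lac.
  have [t2 r2'] := ALT _ _ hb hd nbd lbd.
  by rewrite t1 r1' t2 r2'.
Qed.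
End W4.

Lemma W4_nonrepr (K : sgraph) : has_W4 K -> ~ representable (line_graph K).
Proof.
move=> [h [r1 [r2 [r3 [r4 [[a1 a2 a3 a4] [[b1 b2 b3 b4] /andP [n13 n24]]]]]]]].
exact: (W4_nonrep a1 a2 a3 a4 b1 b2 b3 b4 n13 n24).
Qed.

Definition has_C (G : sgraph) := exists v a b c x y : G,
  [/\ adj v a, adj v b, adj v c & [&& a != b, a != c & b != c]] /\
  adj x y /\ x \in [:: v; a; b; c] /\
  [/\ ~~ ((x == v) && (y == a) || (x == a) && (y == v)),
      ~~ ((x == v) && (y == b) || (x == b) && (y == v)) &
      ~~ ((x == v) && (y == c) || (x == c) && (y == v))].

Lemma star_paw (G : sgraph) (v a b c x y : G) (va : adj v a) (vb : adj v b) (vc : adj v c)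
  (xy : adj x y) : a != b -> a != c -> b != c ->
  ~~ ((x == v) && (y == a) || (x == a) && (y == v)) ->
  ~~ ((x == v) && (y == b) || (x == b) && (y == v)) ->
  ~~ ((x == v) && (y == c) || (x == c) && (y == v)) ->
  (x == v) || (x == a) -> has_paw (line_graph G).
Proof.
move=> nab nac nbc /negbTE h1 /negbTE h2 /negbTE h3 hx.
exists (mkE va), (mkE vb), (mkE vc), (mkE xy).
have := adj_neq va; have := adj_neq vb; have := adj_neq vc.
move=> m1 m2 m3; neqs.
split; rewrite ?mkE_adj ?mkE_eq; bsimp; rewrite ?h1 ?h2 ?h3 //.
apply/andP; split; last by case/orP: hx => /eqP ->; rewrite eqxx ?orbT.
apply: (contraFN _ h1); case/orP=> /andP [/eqP -> /eqP ->]; by rewrite !eqxx ?orbT.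
Qed.

Lemma C_paw (G : sgraph) : has_C G -> has_paw (line_graph G).
Proof.
move=> [v [a [b [c [x [y [[va vb vc /and3P [nab nac nbc]] [xy [hx [h1 h2 h3]]]]]]]]]].
move: hx; rewrite !inE => /or4P [] hx.
- by apply: (star_paw va vb vc xy) => //; rewrite hx.
- by apply: (star_paw va vb vc xy) => //; rewrite hx orbT.
- apply: (star_paw vb va vc xy) => //; [by rewrite eq_sym | by rewrite hx orbT].
- apply: (star_paw vc va vb xy) => //; [by rewrite eq_sym | by rewrite eq_sym | by rewrite hx orbT].
Qed.

Lemma main_from_C (G : sgraph) : has_C G ->
  forall n : nat, 4 <= n -> ~ representable (iter_line n G).
Proof.
move=> hC n hn.
have P : forall m, has_paw (iter_line m.+1 G).
  elim=> [|m IH]; first exact: C_paw.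
  exact: paw_L.
have -> : n = (n - 4).+1.+3 by lia.
apply: W4_nonrepr; apply: diamond_W4; apply: paw_diamond; exact: P.
Qed.

Section Struct.
Variable G : sgraph.

Lemma iso_nth (x0 : G) (p : seq G) (r : rel 'I_(size p).+1) (rs : symmetric r) (ri : irreflexive r) :
  uniq (x0 :: p) -> (forall z, z \in x0 :: p) ->
  (forall i j : 'I_(size p).+1, adj (nth x0 (x0 :: p) i) (nth x0 (x0 :: p) j) = r i j) ->
  isomorphic G (SGraph rs ri).
Proof.
move=> U A H.
pose g (i : 'I_(size p).+1) := nth x0 (x0 :: p) i.
pose f (z : G) : 'I_(size p).+1 := inord (index z (x0 :: p)).
have gf : cancel g f.
  move=> i; apply: ord_inj; rewrite /f /g inordK.
    by rewrite index_uniq.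
  have hi : i < size (x0 :: p) by [].
  by rewrite -[(size p).+1]/(size (x0 :: p)) index_mem mem_nth.
have fg : forall z, nth x0 (x0 :: p) (f z) = z.
  by move=> z; rewrite /f inordK ?nth_index // -[(size p).+1]/(size (x0 :: p)) index_mem.
exists f; split; first by exists g.
by move=> x y; have := H (f x) (f y); rewrite !fg => ->.
Qed.

Lemma path_closed (S : pred G) : (forall x y, x \in S -> adj x y -> y \in S) ->
  forall p w, w \in S -> path (@adj G) w p -> last w p \in S.
Proof.
move=> C; elim=> [|y p IH] w wS //= /andP [wy P].
exact: IH (C _ _ wS wy) P.
Qed.

Lemma all_in (S : pred G) w : connected G -> w \in S ->
  (forall x y, x \in S -> adj x y -> y \in S) -> forall z, z \in S.
Proof.
move=> [_ Con] wS C z; have /connectP [p P ->] := Con w z.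
exact: path_closed C p w wS P.
Qed.

Lemma claw_case (v a b c : G) : adj v a -> adj v b -> adj v c -> a != b -> a != c -> b != c ->
  connected G -> ~ has_C G -> is_claw G.
Proof.
move=> va vb vc nab nac nbc Con nC.
have key : forall x y, adj x y -> x \in [:: v; a; b; c] ->
   [|| (x == v) && (y == a) || (x == a) && (y == v),
       (x == v) && (y == b) || (x == b) && (y == v) |
       (x == v) && (y == c) || (x == c) && (y == v)].
  move=> x y xy xS; apply/negPn/negP => /norP [n1 /norP [n2 n3]].
  apply: nC; exists v, a, b, c, x, y; split; last split => //.
    by split => //; rewrite nab nac nbc.
have clos : forall x y, x \in [:: v; a; b; c] -> adj x y -> y \in [:: v; a; b; c].
  move=> x y xS xy; case/or3P: (key x y xy xS) => /orP [] /andP [_ /eqP ->];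
  by rewrite !inE eqxx ?orbT.
have allS := all_in Con (mem_head v [:: a; b; c]) clos.
have := adj_neq va; have := adj_neq vb; have := adj_neq vc.
move=> m1 m2 m3.
have U : uniq [:: v; a; b; c] by rewrite /= !inE !negb_or m1 m2 m3 nab nac nbc.
neqs.
apply: (@iso_nth v [:: a; b; c] claw_rel claw_rel_sym claw_rel_irr U allS).
case=> [[|[|[|[|i]]]] hi] //; case=> [[|[|[|[|j]]]] hj] //;
  rewrite /= ?adj_irr ?va ?vb ?vc ?(adj_sym a v) ?(adj_sym b v) ?(adj_sym c v) ?va ?vb ?vc //.
all: apply/negbTE/negP => Hxy; have := key _ _ Hxy; rewrite !inE eqxx ?orbT => /(_ isT); bsimp; by [].
Qed.
End Struct.

Section PathCase.
Variable G : sgraph.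
Hypothesis NS : forall z u w t : G, adj z u -> adj z w -> adj z t -> u != w -> u != t -> w != t -> False.
Hypothesis Con : connected G.

Lemma maxpath : exists (x : G) p, [/\ path (@adj G) x p, uniq (x :: p),
  (forall y, adj x y -> y \in x :: p) & (forall y, adj (last x p) y -> y \in x :: p)].
Proof.
have [x0 _] : exists x0 : G, x0 \in G by apply/card_gt0P; case: Con.
suff: forall n x p, #|G| - size p <= n -> path (@adj G) x p -> uniq (x :: p) ->
  exists (x : G) p, [/\ path (@adj G) x p, uniq (x :: p),
    (forall y, adj x y -> y \in x :: p) & (forall y, adj (last x p) y -> y \in x :: p)].
  by move=> /(_ #|G| x0 [::]); apply => //; rewrite subn0.
elim=> [|n IH] x p hn P U.
all: have sz : size (x :: p) <= #|G| by rewrite -(card_uniqP U); apply: max_card.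
all: case: (classic (exists y, adj x y /\ y \notin x :: p)) => [[y [xy yn]]|H1].
- exfalso; move: sz hn => /=; lia.
- case: (classic (exists y, adj (last x p) y /\ y \notin x :: p)) => [[y [xy yn]]|H2].
    exfalso; move: sz hn => /=; lia.
  exists x, p; split => // y h; apply/negPn/negP => yn.
    by apply: H1; exists y.
  by apply: H2; exists y.
- apply: (IH y (x :: p)) => /=.
  + move: sz hn => /=; lia.
  + by rewrite adj_sym xy.
  + by rewrite yn.
- case: (classic (exists y, adj (last x p) y /\ y \notin x :: p)) => [[y [xy yn]]|H2].
    apply: (IH x (rcons p y)).
    + move: sz hn; rewrite size_rcons /=; lia.
    + by rewrite rcons_path P.
    + by rewrite -rcons_cons rcons_uniq yn.
  exists x, p; split => // y h; apply/negPn/negP => yn.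
    by apply: H1; exists y.
  by apply: H2; exists y.
Qed.

Lemma modS (i n : nat) : i < n -> i.+1 %% n = if i.+1 == n then 0 else i.+1.
Proof.
move=> h; case: eqP => [->|ne]; first by rewrite modnn.
by rewrite modn_small //; lia.
Qed.

Lemma path_or_cycle : is_path G \/ is_cycle G.
Proof.
have [x [p [P U Ex El]]] := maxpath.
set k := size p.
have P1 : forall i, i < k -> adj (nth x (x :: p) i) (nth x (x :: p) i.+1).
  by move/(pathP x): P.
have NU : forall i j, i <= k -> j <= k -> (nth x (x :: p) i == nth x (x :: p) j) = (i == j).
  by move=> i j hi hj; rewrite nth_uniq.
have NL : nth x (x :: p) k = last x p by rewrite -[k]/((size (x :: p)).-1) nth_last.
have N0 : nth x (x :: p) 0 = x by [].
have Ins : forall i, i <= k -> nth x (x :: p) i \in x :: p by move=> i hi; rewrite mem_nth.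
have P2 : forall i, 0 < i -> i <= k -> adj (nth x (x :: p) i) (nth x (x :: p) i.-1).
  by move=> i h1 h2; rewrite adj_sym; have := P1 i.-1; rewrite prednK //; apply; lia.
have CL : forall i y, i <= k -> adj (nth x (x :: p) i) y -> y \in x :: p.
  move=> i y hi hy; case: (posnP i) => [i0|ipos].
    by move: hy; rewrite i0 N0; apply: Ex.
  case: (eqVneq i k) => [ik|ik]; first by move: hy; rewrite ik NL; apply: El.
  apply/negPn/negP => yn.
  apply: (NS (P2 i ipos hi) (P1 i _) hy); first lia.
  - rewrite NU; lia.
  - by apply: contraNneq yn => <-; apply: Ins; lia.
  - by apply: contraNneq yn => <-; apply: Ins; lia.
have ALL : forall z, z \in x :: p.
  apply: (all_in Con (mem_head x p)) => z y zs zy.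
  apply: (CL (index z (x :: p))); last by rewrite nth_index.
  by rewrite -ltnS; have := zs; rewrite -index_mem.
have CLAIM : forall i j, i < j -> j <= k -> adj (nth x (x :: p) i) (nth x (x :: p) j) ->
    (j == i.+1) || ((i == 0) && (j == k)).
  move=> i j ij jk h; case: (eqVneq j i.+1) => //= ne.
  have i0 : i = 0.
    apply/eqP/negPn/negP => ipos.
    apply: (NS (P2 i _ _) (P1 i _) h); try lia; rewrite NU; lia.
  subst i; rewrite eqxx /=; apply/negPn/negP => jk'.
  have h' : adj (nth x (x :: p) j) (nth x (x :: p) 0) by rewrite adj_sym.
  apply: (NS (P2 j _ _) (P1 j _) h'); try lia; rewrite NU; lia.
have A1 : forall i j, i < j -> j <= k -> adj (nth x (x :: p) i) (nth x (x :: p) j) =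
    (i.+1 == j) || (j.+1 == i) || (adj x (last x p) && ((i == 0) && (j == k) || (j == 0) && (i == k))).
  move=> i j ij jk; case E: (adj _ _).
    case/orP: (CLAIM i j ij jk E) => [/eqP ->|/andP [/eqP i0 /eqP jk']]; first by rewrite eqxx.
    by subst i j; rewrite N0 NL in E; rewrite E !eqxx /= orbT.
  case: (eqVneq j i.+1) => [ji|ji].
    by subst j; rewrite P1 in E; lia.
  apply/esym/negbTE; rewrite negb_or; apply/andP; split; first lia.
  apply/negP => /andP [C /orP [/andP [/eqP i0 /eqP jk']|/andP [/eqP j0 _]]]; last lia.
  by subst i j; rewrite N0 NL C in E.
have ADJ : forall i j, i <= k -> j <= k -> adj (nth x (x :: p) i) (nth x (x :: p) j) =
    (i.+1 == j) || (j.+1 == i) || (adj x (last x p) && ((i == 0) && (j == k) || (j == 0) && (i == k))).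
  move=> i j hi hj; case: (ltngtP i j) => [ij|ji|<-].
  - exact: A1.
  - by rewrite adj_sym A1 //; case: (adj x (last x p)); lia.
  - rewrite adj_irr; case C: (adj x (last x p)); last lia.
    have k0 : k != 0.
      by apply: contraTneq C => /size0nil pn; rewrite pn /= adj_irr.
    lia.
case: (boolP (adj x (last x p) && (1 < k))) => [/andP [C k2]|NC].
- right; exists k.+1; split; first lia.
  apply: (@iso_nth G x p (@cycle_rel k.+1) (@cycle_rel_sym k.+1) (@cycle_rel_irr k.+1) U ALL).
  move=> i j; have hi := ltn_ord i; have hj := ltn_ord j.
  have hi' : i <= k by rewrite -ltnS.
  have hj' : j <= k by rewrite -ltnS.
  rewrite ADJ // C /cycle_rel /= !modS //.
  have -> : (i == j) = (nat_of_ord i == nat_of_ord j) by [].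
  set a := nat_of_ord i in hi' *; set b := nat_of_ord j in hj' *; clearbody a b; clear hi hj; clearbody k.
  by case: ifP => E1; case: ifP => E2; move: E1 E2; lia.
- left; exists k.+1.
  apply: (@iso_nth G x p (@path_rel k.+1) (@path_rel_sym k.+1) (@path_rel_irr k.+1) U ALL).
  move=> i j; have hi := ltn_ord i; have hj := ltn_ord j.
  have hi' : i <= k by rewrite -ltnS.
  have hj' : j <= k by rewrite -ltnS.
  rewrite ADJ // /path_rel.
  have kz : adj x (last x p) -> k != 0.
    by move=> C; apply: contraTneq C => /size0nil pn; rewrite pn /= adj_irr.
  move: NC kz; case: (adj x (last x p)) => /= NC kz; first have kz' := kz isT.
  all: set a := nat_of_ord i in hi' *; set b := nat_of_ord j in hj' *; clearbody a b; clear hi hj; clearbody k.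
  all: lia.
Qed.
End PathCase.

Lemma structure (G : sgraph) : connected G -> ~ has_C G -> is_path G \/ is_cycle G \/ is_claw G.
Proof.
move=> Con nC.
case: (classic (exists v a b c : G, [/\ adj v a, adj v b, adj v c & [&& a != b, a != c & b != c]])).
  move=> [v [a [b [c [va vb vc /and3P [nab nac nbc]]]]]].
  by right; right; apply: (claw_case va vb vc nab nac nbc Con nC).
move=> NS'.
have NS : forall z u w t : G, adj z u -> adj z w -> adj z t -> u != w -> u != t -> w != t -> False.
  move=> z u w t zu zw zt nuw nut nwt; apply: NS'; exists z, u, w, t; split => //.
  by rewrite nuw nut nwt.
by case: (path_or_cycle NS Con) => h; [left|right; left].
Qed.

Theorem theorem4 (G : sgraph) :
  connected G -> ~ is_path G -> ~ is_cycle G -> ~ is_claw G ->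
  forall n : nat, 4 <= n -> ~ representable (iter_line n G).
Proof.
move=> Con nP nCy nK n hn.
case: (classic (has_C G)) => [hC|nhC]; first exact: main_from_C.
by case: (structure Con nhC) => [//|[//|//]].
Qed.
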